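(* Let $k\geq 2$ be an integer and let $G$ be a graph on $n$ vertices with minimum degree $\delta=\delta(G)>\frac{(k-1)n}{k}$. Suppose $V(G)$ is partitioned into classes $U_1,U_2,X_1,\dots,X_{k-1},A$ such that (a) there are no edges between $U_1$ and $U_2$; (b) all copies of $K_k$ in $G$ consisting of an edge of $G[U_1]$ together with one vertex from each of $X_1,\dots,X_{k-2}$ are pairwise $K_{k+1}$-connected; (c) $|X_i|\leq n-\delta$ for $i\in[k-1]$; (d) $X_i\cap\Gamma(g)$ is an independent set for each $i\in[k-2]$ and each copy $g$ of $K_{i+1}$ consisting of an edge of $G[U_1]$ together with one vertex from each of $X_1,\dots,X_{i-1}$. Let $F$ be a matching in $G[U_1]$ and set $q:=k\delta-(k-1)n+|U_2|-|U_1|-|A|$. Then $G$ contains a connected $K_{k+1}$-factor of size at least $(k+1)\min\{|F|,q\}$.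
   Context: A $K_{k+1}$-walk in $G$ is a sequence of copies of $K_k$ in which consecutive copies lie in a common copy of $K_{k+1}$; its endpoints are then $K_{k+1}$-connected; the equivalence classes of copies of $K_k$ are the $K_{k+1}$-components. A $K_{k+1}$-factor is a set of vertex-disjoint copies of $K_{k+1}$; it is connected if all copies of $K_k$ contained in its members lie in one component; its size is the number of vertices it covers. $\Gamma(g)$ is the common neighbourhood of the vertices of $g$. *)

(* Defs.v *)
From mathcomp Require Import all_boot all_order all_algebra.
Set Implicit Arguments. Unset Strict Implicit. Unset Printing Implicit Defensive.

Section Graphs.
Variable T : finType.
Variable e : rel T.

Definition simple_graph := symmetric e /\ irreflexive e.

Definition deg (v : T) : nat := #|[set u | e v u]|.

(* minimum degree delta(G) (for nonempty vertex set; deg v < #|T| always) *)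
Definition mindeg : nat := \big[minn/#|T|]_(v : T) deg v.

Definition clique (S : {set T}) : bool :=
  [forall x in S, forall y in S, (x != y) ==> e x y].

Definition Kcopy (r : nat) (S : {set T}) : bool := clique S && (#|S| == r).

Definition kstep (k : nat) (g h : {set T}) : bool :=
  [&& Kcopy k g, Kcopy k h &
      [exists S : {set T}, [&& Kcopy k.+1 S, g \subset S & h \subset S]]].

Definition kconnected (k : nat) (g h : {set T}) : bool :=
  [&& Kcopy k g, Kcopy k h & connect (kstep k) g h].

Definition Gamma (g : {set T}) : {set T} := [set v | [forall u in g, e u v]].

Definition independent (S : {set T}) : bool :=
  [forall x in S, forall y in S, ~~ e x y].

Definition Kfactor (k : nat) (FF : {set {set T}}) : bool :=
  [forall S in FF, Kcopy k.+1 S] && trivIset FF.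

Definition connected_Kfactor (k : nat) (FF : {set {set T}}) : Prop :=
  Kfactor k FF /\
  forall S1 S2 g1 g2 : {set T}, S1 \in FF -> S2 \in FF ->
    g1 \subset S1 -> g2 \subset S2 -> #|g1| = k -> #|g2| = k ->
    kconnected k g1 g2.

Definition factor_size (FF : {set {set T}}) : nat := #|cover FF|.

(* g is a copy of K_{j+1} consisting of an edge of G[U1] together with
   one vertex from each of X 1, ..., X (j-1) *)
Definition layered (U1 : {set T}) (X : nat -> {set T}) (j : nat)
    (g : {set T}) : bool :=
  [&& clique g, #|g :&: U1| == 2,
      [forall i : 'I_j, (0 < (i : nat)) ==> (#|g :&: X i| == 1)] &
      g \subset U1 :|: \bigcup_(i < j | 0 < (i : nat)) X i].

Definition matching_in (U1 : {set T}) (F : {set {set T}}) : bool :=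
  [forall f in F, [&& #|f| == 2, clique f & f \subset U1]] && trivIset F.

End Graphs.

(* Main.v *)
Require Import Defs.
From mathcomp Require Import all_boot all_order all_algebra zify.
Import Order.TTheory GRing.Theory Num.Theory.
Set Implicit Arguments. Unset Strict Implicit. Unset Printing Implicit Defensive.

Lemma card_bigcup_le (T : finType) (I : Type) (r : seq I) (P : pred I) (F : I -> {set T}) :
  #|\bigcup_(i <- r | P i) F i| <= \sum_(i <- r | P i) #|F i|.
Proof.
elim/big_rec2: _ => [|i n U _ leUn]; first by rewrite cards0.
by rewrite (leq_trans (leq_card_setU (F i) U).1) ?leq_add2l.
Qed.

Lemma mem_bigcup_seq (T : finType) (s : seq nat) (F : nat -> {set T}) l v :
  l \in s -> v \in F l -> v \in \bigcup_(j <- s) F j.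
Proof.
elim: s => [//|a s IH]; rewrite inE big_cons inE.
by case/orP=> [/eqP<- ->//|/IH h /h ->]; rewrite orbT.
Qed.

Lemma mindeg_le (T : finType) (e : rel T) v : mindeg e <= deg e v.
Proof.
rewrite /mindeg.
have : v \in index_enum T by rewrite mem_index_enum.
elim: (index_enum T) => [//|a s IH]; rewrite inE big_cons.
case/orP=> [/eqP->|/IH]; first exact: geq_minl.
move=> h; exact: leq_trans (geq_minr _ _) h.
Qed.

Lemma mindeg_leT (T : finType) (e : rel T) : mindeg e <= #|T|.
Proof.
rewrite /mindeg; elim/big_rec: _ => // i x _ h.
exact: leq_trans (geq_minr _ _) h.
Qed.

Lemma GammaU1 (T : finType) (e : rel T) x g :
  Gamma e (x |: g) = Gamma e g :&: [set w | e x w].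
Proof.
apply/setP=> w; rewrite !inE; apply/forall_inP/andP => [h|[/forall_inP h1 h2] y].
  split; last by apply: h; rewrite setU11.
  by apply/forall_inP=> y yg; apply: h; rewrite setU1r.
by case/setU1P=> [->//|]; apply: h1.
Qed.

Lemma disjP (T : finType) (B C : {set T}) :
  (forall v, v \in B -> v \in C -> False) -> [disjoint B & C].
Proof.
move=> h; rewrite disjoint_subset; apply/subsetP => v vB; rewrite inE.
by apply/negP => vC; exact: h v vB vC.
Qed.

Lemma clique_sub (T : finType) (e : rel T) (g S : {set T}) :
  g \subset S -> clique e S -> clique e g.
Proof.
move=> /subsetP sub /forall_inP h; apply/forall_inP => x xg.
by have /forall_inP h2 := h x (sub x xg); apply/forall_inP => y yg; apply: h2; apply: sub.
Qed.

Section Main.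
Variables (k : nat) (T : finType) (e : rel T)
  (U1 U2 A : {set T}) (X : nat -> {set T}) (F : {set {set T}}).
Hypothesis Hk : (2 <= k)%N.
Hypothesis Hsg : simple_graph e.
Hypothesis HXd : forall i, (1 <= i <= k - 1)%N ->
     [&& [disjoint X i & U1], [disjoint X i & U2] & [disjoint X i & A]].
Hypothesis HXX : forall i j, (1 <= i <= k - 1)%N -> (1 <= j <= k - 1)%N -> i <> j ->
     [disjoint X i & X j].
Hypothesis Hcov : forall v : T, v \in U1 \/ v \in U2 \/ v \in A \/
     exists2 i, (1 <= i <= k - 1)%N & v \in X i.
Hypothesis Ha : forall u w, u \in U1 -> w \in U2 -> ~~ e u w.
Hypothesis Hb : forall g h, layered e U1 X (k - 1) g -> layered e U1 X (k - 1) h ->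
     kconnected e k g h.
Hypothesis Hc : forall i, (1 <= i <= k - 1)%N -> (#|X i| <= #|T| - mindeg e)%N.
Hypothesis Hd : forall i g, (1 <= i <= k - 2)%N -> layered e U1 X i g ->
     independent e (X i :&: Gamma e g).

Local Notation n := #|T|.
Local Notation d := (mindeg e).

Lemma esym x y : e x y = e y x.
Proof. by case: Hsg => s _; apply: s. Qed.
Lemma eirr x : e x x = false.
Proof. by case: Hsg => _ i; apply: i. Qed.

Lemma XnotU1 i x : 1 <= i <= k - 1 -> x \in X i -> x \notin U1.
Proof. by move=> /HXd /and3P[h _ _] xi; rewrite (disjointFr h xi). Qed.

Lemma XnotX i j x : 1 <= i <= k - 1 -> 1 <= j <= k - 1 -> i <> j ->
  x \in X i -> x \notin X j.
Proof. by move=> hi hj ij xi; rewrite (disjointFr (HXX hi hj ij) xi). Qed.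

Lemma layered_sub i g v : layered e U1 X i g -> v \in g ->
  v \in U1 \/ exists2 l, 0 < l < i & v \in X l.
Proof.
case/and4P => _ _ _ /subsetP sub /sub; rewrite inE.
case/orP=> [|/bigcupP[l /= lp vl]]; [by left | right; exists l => //].
by rewrite lp ltn_ord.
Qed.

Definition inv (f C g : {set T}) (i : nat) : Prop :=
  [/\ layered e U1 X i g, g :&: U1 = f, [disjoint g & C],
      (i.+1 * d + #|U2| <= #|Gamma e g| + i * n)%N &
      (forall l, 1 <= l < i -> l <= k - 2 -> [disjoint Gamma e g & X l]) /\
      (forall l, i <= l <= k - 1 -> [disjoint g & X l])].

Lemma inv_base (f C : {set T}) : #|f| == 2 -> clique e f -> f \subset U1 -> [disjoint f & C] ->
  inv f C f 1.
Proof.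
move=> f2 cf fU fC.
have fI : f :&: U1 = f by apply/setIidPl.
split => //.
- apply/and4P; split => //; first by rewrite fI.
    by apply/forallP => -[[|l] //].
  by apply/subsetP => v /(subsetP fU) vU; rewrite inE vU.
- case/cards2P: f2 => u [v [uv fuv]].
  have uU : u \in U1 by apply: (subsetP fU); rewrite fuv !inE eqxx.
  have vU : v \in U1 by apply: (subsetP fU); rewrite fuv !inE eqxx orbT.
  have -> : Gamma e f = [set w | e u w] :&: [set w | e v w].
    rewrite fuv GammaU1 setIC; congr (_ :&: _).
    apply/setP => w; rewrite !inE; apply/forall_inP/idP => [h|h y].
      by apply: h; rewrite inE.
    by rewrite inE => /eqP->.
  have hU := cardsUI [set w | e u w] [set w | e v w].
  have hsub : [set w | e u w] :|: [set w | e v w] \subset ~: U2.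
    apply/subsetP => w; rewrite !inE => /orP[h|h]; apply/negP => wU2.
      by move: (Ha uU wU2); rewrite h.
    by move: (Ha vU wU2); rewrite h.
  have := subset_leq_card hsub; have := cardsC U2.
  have := mindeg_le e u; have := mindeg_le e v; rewrite /deg.
  lia.
- split => l.
    by case/andP => l1 l2; lia.
  move=> /andP[l1 l2]; rewrite disjoint_sym.
  apply: disjointWl (_ : X l \subset ~: U1) _; last first.
    by apply: disjP => v; rewrite inE => /negP h /(subsetP fU).
  apply/subsetP => v vX; rewrite inE; apply: XnotU1 vX; lia.
Qed.


Lemma inv_step (f C g : {set T}) i : inv f C g i -> 1 <= i <= k - 1 ->
  #|C :&: X i| + (k - 1) * n + #|U1| + #|A| < k * d + #|U2| ->
  exists x, [/\ x \in X i, x \in Gamma e g, x \notin C & inv f C (x |: g) i.+1].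
Proof.
move=> [Hlay HU1 HC Hcnt [HG Hgx]] /andP[i1 ik] Hq.
have [u uf] : exists u, u \in g :&: U1.
  apply/set0Pn; rewrite -card_gt0.
  by case/and4P: Hlay => _ /eqP-> _ _.
have ug : u \in g by move: uf; rewrite inE => /andP[].
have uU : u \in U1 by move: uf; rewrite inE => /andP[].
pose Gi := Gamma e g :&: X i.
pose Y := \bigcup_(l <- index_iota i.+1 k) X l.
have Gsub : Gamma e g \subset U1 :|: A :|: Gi :|: Y.
  apply/subsetP => v vG.
  have evu : e u v by move: vG; rewrite inE => /forall_inP; apply.
  case: (Hcov v) => [vU1|[vU2|[vA|[l /andP[l1 lk] vl]]]].
  - by rewrite !inE vU1.
  - by move: (Ha uU vU2); rewrite evu.
  - by rewrite !inE vA orbT.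
  case: (ltngtP l i) => li.
  - have := HG l; rewrite l1 li => /(_ isT) h.
    have /h : l <= k - 2 by clear -li ik; lia.
    by move=> /disjointFr /(_ vG); rewrite vl.
  - rewrite inE; apply/orP; right; apply: mem_bigcup_seq vl.
    rewrite mem_index_iota li /=; clear -lk Hk; lia.
  - by rewrite !in_setU /Gi in_setI vG -li vl !orbT.
have cardY : #|Y| <= (k - i.+1) * (n - d).
  apply: leq_trans (card_bigcup_le _ _ _) _.
  rewrite -sum_nat_const_nat big_seq [X in _ <= X]big_seq.
  apply: leq_sum => l; rewrite mem_index_iota => /andP[l1 l2].
  apply: Hc; clear -l1 l2; lia.
have cardG : #|Gamma e g| <= #|U1| + #|A| + #|Gi| + #|Y|.
  apply: leq_trans (subset_leq_card Gsub) _.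
  apply: leq_trans (leq_card_setU _ _).1 _; rewrite leq_add2r.
  apply: leq_trans (leq_card_setU _ _).1 _; rewrite leq_add2r.
  exact: (leq_card_setU _ _).1.
have dn := mindeg_leT e.
have ltG : #|C :&: X i| < #|Gi|.
  have [r hr] : exists r, k = r + i.+1 by exists (k - i.+1); clear -ik Hk; lia.
  have hr' : k - i.+1 = r by clear -hr; lia.
  rewrite hr' mulnBr in cardY.
  rewrite hr (_ : r + i.+1 - 1 = r + i) in Hq; last by clear; lia.
  rewrite !mulnDl in Hq.
  have : r * d <= r * n by rewrite leq_mul2l dn orbT.
  move: Hcnt Hq cardY cardG; clear -dn; rewrite !mulSn; lia.
have [x xGi xC] : exists2 x, x \in Gi & x \notin C.
  apply/subsetPn; apply/negP => sub.
  have : Gi \subset C :&: X i.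
    by apply/subsetP => v vG; rewrite inE (subsetP sub v vG); case/setIP: vG => _ ->.
  by move/subset_leq_card; rewrite leqNgt ltG.
have xG : x \in Gamma e g by case/setIP: xGi.
have xX : x \in X i by case/setIP: xGi.
have xU1 : x \notin U1 by apply: XnotU1 xX; rewrite i1 ik.
have gx : g :&: X i = set0.
  by apply/disjoint_setI0; apply: Hgx; rewrite leqnn ik.
have IU : (x |: g) :&: U1 = g :&: U1.
  apply/setP => v; rewrite !inE; case: eqP => [->|] //=.
  by rewrite (negbTE xU1); case: (x \in g).
exists x; split => //.
split.
- apply/and4P; split.
  + apply/forall_inP => y /setU1P[->|yg]; apply/forall_inP => z /setU1P[->|zg];
      apply/implyP => neq.
    * by rewrite eqxx in neq.
    * by rewrite esym; move: xG; rewrite inE => /forall_inP; apply.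
    * by move: xG; rewrite inE => /forall_inP; apply.
    * by case/and4P: Hlay => /forall_inP /(_ y yg) /forall_inP /(_ z zg) /implyP h _ _ _; apply: h.
  + by rewrite IU; case/and4P: Hlay.
  + apply/forallP => l; apply/implyP => l0.
    case: (ltnP l i) => li.
    * case/and4P: Hlay => _ _ /forallP /(_ (Ordinal li)) /= /implyP /(_ l0) h _.
      suff -> : (x |: g) :&: X l = g :&: X l by [].
      have xl : x \notin X l.
        apply: (XnotX (i := i)) ; [by rewrite i1 ik | clear -l0 li ik; lia | clear -li; lia | exact: xX].
      apply/setP => v; rewrite !inE; case: eqP => [->|] //=.
      by rewrite (negbTE xl) andbF.
    * have li' : (l : nat) = i by clear -li; have := ltn_ord l; lia.
      rewrite li'.
      have -> : (x |: g) :&: X i = [set x].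
        apply/setP => v; rewrite !inE; case: eqP => [->|] //=.
        move=> _; apply/negP => /andP[vg vX].
        have : v \in g :&: X i by rewrite inE vg vX.
        by rewrite gx inE.
      by rewrite cards1.
  + apply/subsetP => y /setU1P[->|yg]; rewrite inE; apply/orP.
      right; apply/bigcupP; exists (ord_max : 'I_i.+1) => //=.
    case: (layered_sub Hlay yg) => [->|[l /andP[l0 li] yl]]; first by left.
    right; apply/bigcupP; exists (Ordinal (ltnW li : l < i.+1)) => //.
- by rewrite IU.
- apply: disjP => v /setU1P[->|vg] vC; first by rewrite vC in xC.
  by rewrite (disjointFr HC vg) in vC.
- rewrite GammaU1.
  have := cardsUI (Gamma e g) [set w | e x w].
  have := max_card (Gamma e g :|: [set w | e x w]).
  have := mindeg_le e x; rewrite /deg.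
  move: Hcnt; clear -dn; rewrite !mulSn; lia.
split => l.
- move=> /andP[l1 li] lk.
  case: (ltngtP l i) => li'.
  + apply: disjointWl (HG l _ lk); first by rewrite GammaU1 subsetIl.
    by rewrite l1 li'.
  + by move: li li'; clear; lia.
  apply: disjP => v; rewrite GammaU1 li' => /setIP[vG]; rewrite inE => exv vX.
  have hi : 1 <= i <= k - 2 by clear -l1 li' lk; lia.
  move/forall_inP: (Hd hi Hlay) => /(_ x) ; rewrite inE xX xG => /(_ isT) /forall_inP /(_ v).
  by rewrite inE vX vG exv => /(_ isT).
- move=> /andP[il lk].
  apply: disjP => v /setU1P[->|vg] vX.
    have : x \notin X l by apply: (XnotX (i := i)) ; [by rewrite i1 ik | clear -il lk i1; lia | clear -il; lia | exact: xX].
    by rewrite vX.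
  have : [disjoint g & X l] by apply: Hgx; clear -il lk; lia.
  by move/disjointFr/(_ vg); rewrite vX.
Qed.

Definition bnd (C : {set T}) := forall l, 1 <= l <= k - 1 ->
  #|C :&: X l| + (k - 1) * n + #|U1| + #|A| < k * d + #|U2|.

Lemma inv_iter (f C : {set T}) : bnd C -> inv f C f 1 ->
  forall j, j <= k - 2 -> exists g, inv f C g j.+1.
Proof.
move=> hb h0; elim => [|j IH] hj; first by exists f.
have [g hg] := IH (ltnW hj).
have hj' : 1 <= j.+1 <= k - 1 by clear -hj; lia.
have [x [_ _ _ h]] := inv_step hg hj' (hb _ hj').
by exists (x |: g).
Qed.

Lemma add_clique (f C : {set T}) : #|f| == 2 -> clique e f -> f \subset U1 ->
  [disjoint f & C] -> bnd C ->
  exists S, [/\ Kcopy e k.+1 S, exists2 L, layered e U1 X (k - 1) L & L \subset S,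
     S :&: U1 = f, [disjoint S & C] &
     forall l, 1 <= l <= k - 1 -> #|S :&: X l| <= 1].
Proof.
move=> f2 cf fU fC hb.
have [L hL] := inv_iter hb (inv_base f2 cf fU fC) (leqnn (k - 2)).
rewrite (_ : (k - 2).+1 = k - 1) in hL; last by clear -Hk; lia.
have hk1 : 1 <= k - 1 <= k - 1 by clear -Hk; lia.
have [x [xX xG xC hS]] := inv_step hL hk1 (hb _ hk1).
case: hL => HlayL _ _ _ _.
case: hS => HlayS HU HC _ _.
have Lk : #|L| = k.
  by case/and3P: (Hb HlayL HlayL) => /andP[_ /eqP].
have xL : x \notin L.
  apply/negP => xL; move: xG; rewrite inE => /forall_inP /(_ x xL).
  by rewrite eirr.
have ek : (k - 1).+1 = k by clear -Hk; lia.
rewrite ek in HlayS.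
exists (x |: L); split => //.
- rewrite /Kcopy; case/and4P: HlayS => -> _ _ _ /=.
  by rewrite cardsU1 xL Lk.
- by exists L => //; apply: subsetUr.
- move=> l /andP[l1 lk].
  have lk' : l < k by clear -lk Hk; lia.
  case/and4P: HlayS => _ _ /forallP /(_ (Ordinal lk')) /= /implyP /(_ l1) /eqP -> _.
  by [].
Qed.


Lemma outer : matching_in e U1 F -> forall m, m <= #|F| ->
  m + (k - 1) * n + #|U1| + #|A| <= k * d + #|U2| ->
  exists F' : {set {set T}}, exists FF : {set {set T}}, [/\ F' \subset F, #|F'| = m, Kfactor e k FF,
     (forall S, S \in FF -> exists2 L, layered e U1 X (k - 1) L & L \subset S) &
     [/\ #|cover FF| = k.+1 * m,
     (cover FF :&: U1 \subset cover F') &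
     (forall l, 1 <= l <= k - 1 -> #|cover FF :&: X l| <= m)]].
Proof.
case/andP=> /forall_inP HF trF.
elim => [|m IH] hm hq.
  exists set0, set0; split.
  - exact: sub0set.
  - exact: cards0.
  - apply/andP; split; first by apply/forall_inP => S; rewrite inE.
    by rewrite /trivIset /cover !big_set0 cards0.
  - by move=> S; rewrite inE.
  split; first by rewrite /cover big_set0 cards0 muln0.
  - by rewrite /cover !big_set0 set0I.
  - by move=> l _; rewrite /cover big_set0 set0I cards0.
have hm' : m <= #|F| by clear -hm; lia.
have hq' : m + (k - 1) * n + #|U1| + #|A| <= k * d + #|U2| by clear -hq; lia.
have [F' [FF [sub cF KF HL [cC cU cX]]]] := IH hm' hq'.
have [f fF fF'] : exists2 f, f \in F & f \notin F'.
  apply/subsetPn; apply/negP => s; have := subset_leq_card s; rewrite cF.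
  by clear -hm; lia.
have /and3P[f2 cf fU] := HF f fF.
have fC : [disjoint f & cover FF].
  apply: disjP => v vf vC.
  have vU : v \in U1 := subsetP fU v vf.
  have : v \in cover F' by apply: (subsetP cU); rewrite inE vC vU.
  rewrite /cover => /bigcupP[f' f'F' vf'].
  have ff' : f != f' by apply: contraNneq fF' => ->.
  have := trivIsetP trF f f' fF (subsetP sub f' f'F') ff'.
  by move/disjointFr/(_ vf); rewrite vf'.
have hb : bnd (cover FF).
  move=> l hl; have := cX l hl; clear -hq; lia.
have [S [KS [L HL' LS] SU SC SX]] := add_clique f2 cf fU fC hb.
case/andP: KF => /forall_inP KF1 trFF.
have S0 : set0 \notin FF.
  apply/negP => h; have := KF1 set0 h; rewrite /Kcopy cards0.
  by case/andP.
have [|trS SnF] := trivIsetU1 (A := S) (P := FF) _ trFF S0.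
  move=> B BF; rewrite disjoint_sym.
  apply: disjointWl (bigcup_sup B BF) _.
  by rewrite disjoint_sym.
exists (f |: F'), (S |: FF); split.
- by apply/subsetP => y /setU1P[->//|/(subsetP sub)].
- by rewrite cardsU1 fF' cF.
- apply/andP; split => //; apply/forall_inP => S' /setU1P[->//|/KF1] //.
- by move=> S' /setU1P[->|/HL]; [exists L | ].
split.
- rewrite /cover big_setU1 //= cardsU.
  rewrite (disjoint_setI0 SC) cards0 subn0.
  move: KS; rewrite /Kcopy => /andP[_ /eqP ->].
  by rewrite -/(cover FF) cC mulnS.
- rewrite /cover !big_setU1 //= setIUl; apply/subsetP => v /setUP[vS|vC].
    by rewrite inE -SU vS.
  by rewrite inE (subsetP cU v vC) orbT.
- move=> l hl; rewrite /cover big_setU1 //= -/(cover FF) setIUl.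
  apply: leq_trans (leq_card_setU _ _).1 _.
  have := SX l hl; have := cX l hl; idtac.
  by clear; lia.
Qed.


Lemma conn_ok (FF : {set {set T}}) : Kfactor e k FF ->
  (forall S, S \in FF -> exists2 L, layered e U1 X (k - 1) L & L \subset S) ->
  connected_Kfactor e k FF.
Proof.
move=> KF HL; split => // S1 S2 g1 g2 S1F S2F g1S g2S g1k g2k.
case/andP: (KF) => /forall_inP KF1 _.
have [L1 HL1 LS1] := HL _ S1F.
have [L2 HL2 LS2] := HL _ S2F.
have KL1 : Kcopy e k L1 by case/and3P: (Hb HL1 HL1).
have KL2 : Kcopy e k L2 by case/and3P: (Hb HL2 HL2).
have Kg1 : Kcopy e k g1.
  rewrite /Kcopy g1k eqxx andbT; apply: clique_sub g1S _.
  by case/andP: (KF1 _ S1F).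
have Kg2 : Kcopy e k g2.
  rewrite /Kcopy g2k eqxx andbT; apply: clique_sub g2S _.
  by case/andP: (KF1 _ S2F).
have st1 : kstep e k g1 L1.
  by rewrite /kstep Kg1 KL1; apply/existsP; exists S1; rewrite KF1 // g1S LS1.
have st2 : kstep e k L2 g2.
  by rewrite /kstep Kg2 KL2; apply/existsP; exists S2; rewrite KF1 // g2S LS2.
have c12 : connect (kstep e k) L1 L2 by case/and3P: (Hb HL1 HL2).
rewrite /kconnected Kg1 Kg2 /=.
apply: connect_trans (connect1 st1) _.
exact: connect_trans c12 (connect1 st2).
Qed.

End Main.

Unset Implicit Arguments.
Set Strict Implicit.

Theorem lemma5p6 (k : nat) (T : finType) (e : rel T)
  (U1 U2 A : {set T}) (X : nat -> {set T}) (F : {set {set T}}) :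
  (2 <= k)%N ->
  simple_graph e ->
  (* delta(G) > (k-1) n / k *)
  ((k - 1) * #|T| < k * mindeg e)%N ->
  (* V(G) is partitioned into U1, U2, X 1, ..., X (k-1), A *)
  [disjoint U1 & U2] -> [disjoint U1 & A] -> [disjoint U2 & A] ->
  (forall i, (1 <= i <= k - 1)%N ->
     [&& [disjoint X i & U1], [disjoint X i & U2] & [disjoint X i & A]]) ->
  (forall i j, (1 <= i <= k - 1)%N -> (1 <= j <= k - 1)%N -> i <> j ->
     [disjoint X i & X j]) ->
  (forall v : T, v \in U1 \/ v \in U2 \/ v \in A \/
     exists2 i, (1 <= i <= k - 1)%N & v \in X i) ->
  (* (a) *)
  (forall u w, u \in U1 -> w \in U2 -> ~~ e u w) ->
  (* (b) *)
  (forall g h, layered e U1 X (k - 1) g -> layered e U1 X (k - 1) h ->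
     kconnected e k g h) ->
  (* (c) *)
  (forall i, (1 <= i <= k - 1)%N -> (#|X i| <= #|T| - mindeg e)%N) ->
  (* (d) *)
  (forall i g, (1 <= i <= k - 2)%N -> layered e U1 X i g ->
     independent e (X i :&: Gamma e g)) ->
  matching_in e U1 F ->
  exists FF : {set {set T}},
    connected_Kfactor e k FF /\
    ((k.+1)%:Z * Num.min (#|F|%:Z)
        ((k * mindeg e)%:Z - ((k - 1) * #|T|)%:Z + #|U2|%:Z - #|U1|%:Z - #|A|%:Z)
      <= (factor_size FF)%:Z)%R.
Proof.
move=> Hk Hsg Hdel HU12 HU1A HU2A HXd HXX Hcov Ha Hb Hc Hd HM.
set q := ((k * mindeg e)%:Z - _ + _ - _ - _)%R.
case: (leqP ((k - 1) * #|T| + #|U1| + #|A|) (k * mindeg e + #|U2|)) => hq.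
  set qn := k * mindeg e + #|U2| - ((k - 1) * #|T| + #|U1| + #|A|).
  have qE : q = (qn%:Z)%R.
    rewrite /q /qn; move: hq; clear; lia.
  set m := minn #|F| qn.
  have hm : m <= #|F| by apply: geq_minl.
  have hmq : m + (k - 1) * #|T| + #|U1| + #|A| <= k * mindeg e + #|U2|.
    have : m <= qn by apply: geq_minr.
    rewrite /qn; move: hq; clear; lia.
  have [F' [FF [_ _ KF HL [cC _ _]]]] :=
    outer Hk Hsg HXd HXX Hcov Ha Hb Hc Hd HM hm hmq.
  exists FF; split; first exact: (@conn_ok k T e U1 X Hb FF KF HL).
  rewrite /factor_size cC PoszM.
  rewrite ler_pM2l ?ltz_nat //.
  rewrite /m qE; case: (leqP #|F| qn) => h.
    by rewrite ge_min lexx.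
  by rewrite ge_min lexx orbT.
exists set0; split.
  split.
    apply/andP; split; first by apply/forall_inP => S; rewrite inE.
    by rewrite /trivIset /cover !big_set0 cards0.
  by move=> S1 S2 g1 g2; rewrite inE.
apply: (@le_trans _ _ 0%R).
  apply: mulr_ge0_le0 => //.
  rewrite ge_min; apply/orP; right.
  rewrite /q; move: hq; clear; lia.
by [].
Qed.
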